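(* Let $A$ be a finite-dimensional Leibniz algebra over a field which is not nilpotent but all of whose proper subalgebras are nilpotent. Then $\dim(A/A^2)\le 1$.
   Context: A (left) Leibniz algebra is an algebra satisfying $x(yz)=(xy)z+y(xz)$ for all $x,y,z$. $A^2=AA$; nilpotent means $A^t=0$ for some $t$, where $A^1=A$, $A^{j+1}=AA^j$. *)

(* Defs.v *)
From HB Require Import structures.
From mathcomp Require Import all_boot all_order all_algebra.
Set Implicit Arguments. Unset Strict Implicit. Unset Printing Implicit Defensive.
Import GRing.Theory.
Local Open Scope ring_scope.
Local Open Scope vspace_scope.

(* An algebra structure on a finite-dimensional F-vector space V is given by a
   (bilinear) product mul : V -> V -> V; bilinearity is a hypothesis of the
   theorem.  For subspaces U W, U W := span {x y | x in U, y in W}; by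
   bilinearity this is the span of products of basis vectors. *)
Definition prodsp (F : fieldType) (V : vectType F) (mul : V -> V -> V)
  (U W : {vspace V}) : {vspace V} :=
  <<allpairs mul (vbasis U) (vbasis W)>>.

(* lpow mul U n = U^(n+1), where U^1 = U and U^(j+1) = U U^j. *)
Fixpoint lpow (F : fieldType) (V : vectType F) (mul : V -> V -> V)
  (U : {vspace V}) (n : nat) : {vspace V} :=
  match n with
  | O => U
  | S k => prodsp mul U (lpow mul U k)
  end.

Definition nilpotent_sp (F : fieldType) (V : vectType F) (mul : V -> V -> V)
  (U : {vspace V}) : Prop :=
  exists n : nat, lpow mul U n = 0.

Definition is_subalg (F : fieldType) (V : vectType F) (mul : V -> V -> V)
  (U : {vspace V}) : Prop :=
  forall x y, x \in U -> y \in U -> mul x y \in U.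

Definition bilinear_mul (F : fieldType) (V : vectType F) (mul : V -> V -> V) : Prop :=
  (forall (a : F) (x y z : V), (mul (a *: x + y) z = a *: mul x z + mul y z)%R) /\
  (forall (a : F) (x y z : V), (mul x (a *: y + z) = a *: mul x y + mul x z)%R).

Definition left_leibniz (F : fieldType) (V : vectType F) (mul : V -> V -> V) : Prop :=
  forall x y z : V, (mul x (mul y z) = mul (mul x y) z + mul y (mul x z))%R.

(* Main.v *)
Require Import Defs.
From HB Require Import structures.
From mathcomp Require Import all_boot all_order all_algebra.
Local Open Scope ring_scope.
Local Open Scope vspace_scope.
Import GRing.Theory.
From mathcomp Require Import zify.

Section Helpers.
Context {F : fieldType} {V : vectType F} {mul : V -> V -> V}.
Hypothesis Hbil : bilinear_mul mul.

Lemma mul0l z : mul 0%R z = 0%R.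
Proof.
have h := (proj1 Hbil) 1 0%R 0%R z. rewrite !scale1r addr0 in h.
by apply: (@addrI _ (mul 0%R z)); rewrite addr0 -h.
Qed.
Lemma mul0r z : mul z 0%R = 0%R.
Proof.
have h := (proj2 Hbil) 1 z 0%R 0%R. rewrite !scale1r addr0 in h.
by apply: (@addrI _ (mul z 0%R)); rewrite addr0 -h.
Qed.
Lemma mulDl x y z : (mul (x + y) z = mul x z + mul y z)%R.
Proof. by have h := (proj1 Hbil) 1 x y z; rewrite !scale1r in h. Qed.
Lemma mulDr x y z : (mul z (x + y) = mul z x + mul z y)%R.
Proof. by have h := (proj2 Hbil) 1 z x y; rewrite !scale1r in h. Qed.
Lemma mulZl a x z : (mul (a *: x) z = a *: mul x z)%R.
Proof. by have h := (proj1 Hbil) a x 0%R z; rewrite addr0 mul0l addr0 in h. Qed.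
Lemma mulZr a x z : (mul z (a *: x) = a *: mul z x)%R.
Proof. by have h := (proj2 Hbil) a z x 0%R; rewrite addr0 mul0r addr0 in h. Qed.

Lemma mul_suml I (r : seq I) (P : pred I) (f : I -> V) z :
  (mul (\sum_(i <- r | P i) f i) z = \sum_(i <- r | P i) mul (f i) z)%R.
Proof. exact: (big_morph (fun x => mul x z) (fun x y => mulDl x y z) (mul0l z)). Qed.
Lemma mul_sumr I (r : seq I) (P : pred I) (f : I -> V) z :
  (mul z (\sum_(i <- r | P i) f i) = \sum_(i <- r | P i) mul z (f i))%R.
Proof. exact: (big_morph (fun x => mul z x) (fun x y => mulDr x y z) (mul0r z)). Qed.

Lemma span_closr (X : seq V) (S : {vspace V}) x w :
  (forall z, z \in X -> mul x z \in S) -> w \in <<X>> -> mul x w \in S.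
Proof.
move=> H Hw; have := @coord_span _ _ _ (in_tuple X) w Hw => ->.
rewrite mul_sumr; apply: rpred_sum => i _; rewrite mulZr; apply: rpredZ.
by apply: H; apply: mem_nth; exact: ltn_ord.
Qed.

Lemma mem_prodsp (U W : {vspace V}) x y :
  x \in U -> y \in W -> mul x y \in prodsp mul U W.
Proof.
move=> Hx Hy; rewrite (coord_vbasis Hx) mul_suml; apply: rpred_sum => i _.
rewrite mulZl; apply: rpredZ.
rewrite (coord_vbasis Hy) mul_sumr; apply: rpred_sum => j _.
rewrite mulZr; apply: rpredZ; apply: memv_span; apply: allpairs_f; apply: mem_nth;
  by rewrite size_tuple.
Qed.

Lemma prodsp_sub (U W S : {vspace V}) :
  (forall x y, x \in U -> y \in W -> mul x y \in S) -> (prodsp mul U W <= S).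
Proof.
move=> H; apply/span_subvP => z /allpairsP [[a b] [Ha Hb ->]] /=.
by apply: H; apply: vbasis_mem.
Qed.

Lemma lpow_zero (U : {vspace V}) a m : lpow mul U a = 0%VS -> lpow mul U (a + m) = 0%VS.
Proof.
move=> H; elim: m => [|m IH]; first by rewrite addn0.
rewrite addnS /= IH; apply/eqP; rewrite -subv0; apply: prodsp_sub => x y _.
by rewrite memv0 => /eqP ->; rewrite mul0r mem0v.
Qed.

Hypothesis Hleib : left_leibniz mul.

Lemma lpow_ideal (U : {vspace V}) x s :
  (forall u, u \in U -> mul x u \in U) ->
  forall w, w \in lpow mul U s -> mul x w \in lpow mul U s.
Proof.
move=> HU; elim: s => [|s IH] w //=; first exact: HU.
rewrite /prodsp => Hw; eapply span_closr; last exact: Hw; move=> z /allpairsP [[a b] [Ha Hb ->]] /=.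
rewrite Hleib; apply: rpredD; apply: mem_prodsp.
- by apply: HU; apply: vbasis_mem.
- exact: vbasis_mem.
- exact: vbasis_mem.
- by apply: IH; apply: vbasis_mem.
Qed.

End Helpers.
Theorem mainTheorem6 (F : fieldType) (V : vectType F) (mul : V -> V -> V)
  (Hbil : bilinear_mul mul) (Hleib : left_leibniz mul)
  (Hnotnil : ~ nilpotent_sp mul fullv)
  (Hmin : forall U : {vspace V}, is_subalg mul U -> U != fullv -> nilpotent_sp mul U) :
  (\dim (fullv : {vspace V}) - \dim (prodsp mul fullv fullv) <= 1)%N.
Proof.
set P := prodsp mul fullv fullv.
rewrite leqNgt; apply/negP => Hlt.
have HPf : forall x y, mul x y \in P.
  move=> x y; rewrite /P; apply: (mem_prodsp Hbil); exact: memvf.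
have [v vP] : exists v, v \notin P.
  have Hn : ~~ (fullv <= P)%VS.
    apply/negP => H; have := dimvS H; lia.
  have : ~~ all (fun z => z \in P) (vbasis fullv).
    apply: contra Hn => /allP H.
    rewrite -(span_basis (vbasisP fullv)); apply/span_subvP => z /H //.
  by case/allPn => z _ zn; exists z.
set M1 := (P + <[v]>)%VS.
set M2 := (P + M1^C)%VS.
have dP1 : (\dim P < \dim M1)%N.
  rewrite (ltn_leqif (dimv_leqif_sup (addvSl _ _))).
  apply: contra vP => H; apply: (subvP H); apply: (subvP (addvSr P <[v]>)).
  exact: memv_line.
have dM1 : (\dim M1 < \dim (fullv : {vspace V}))%N.
  have := (dimv_add_leqif P <[v]>).1; rewrite -/M1 dim_vline; case: (v != 0%R) => /=; lia.
have dM2 : (\dim M2 < \dim (fullv : {vspace V}))%N.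
  have := (dimv_add_leqif P M1^C).1; rewrite -/M2 dimv_compl; lia.
have M1p : M1 != fullv by apply: contraTneq dM1 => ->; rewrite ltnn.
have M2p : M2 != fullv by apply: contraTneq dM2 => ->; rewrite ltnn.
have I1 : forall x u, mul x u \in M1 by move=> x u; apply: (subvP (addvSl P _)).
have I2 : forall x u, mul x u \in M2 by move=> x u; apply: (subvP (addvSl P _)).
have [a Ha] := Hmin M1 (fun x y _ _ => I1 x y) M1p.
have [b Hb] := Hmin M2 (fun x y _ _ => I2 x y) M2p.
have Hsum : forall x, x \in (M1 + M2)%VS.
  move=> x; apply: (subvP (addvS (subvv M1) (addvSr P M1^C))).
  by rewrite addv_complf memvf.
pose Z k := (\sum_(s < k.+1) (lpow mul M1 s :&: lpow mul M2 (k - s)))%VS.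
have key : forall k, (lpow mul fullv k.+1 <= Z k)%VS.
  elim => [|k IH].
    rewrite /Z big_ord1 subn0 /=. apply: prodsp_sub => // x y _ _.
    by rewrite memv_cap I1 I2.
  rewrite [lpow _ _ k.+2]/=; apply: prodsp_sub => x y _ Hy.
  have /memv_sumP [ys Hys ->] := subvP IH y Hy.
  have /memv_addP [u1 Hu1 [u2 Hu2 ->]] := Hsum x.
  rewrite (mulDl Hbil) !(mul_sumr Hbil); apply: rpredD; apply: rpred_sum => s _;
    have /memv_capP [Hs1 Hs2] := Hys s isT.
  - apply: (subvP (@sumv_sup _ _ _ (inord s.+1) xpredT
       (lpow mul M1 s.+1 :&: lpow mul M2 (k - s)) _ isT _)).
      by rewrite /= inordK ?subSS ?subvv // ltnS.
    rewrite memv_cap; apply/andP; split; first exact: (mem_prodsp Hbil).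
    exact: (lpow_ideal Hbil Hleib _ _ _ (fun u _ => I2 u1 u) _ Hs2).
  - have sk : (s <= k)%N by rewrite -ltnS.
    apply: (subvP (@sumv_sup _ _ _ (inord s) xpredT
       (lpow mul M1 s :&: lpow mul M2 (k - s).+1) _ isT _)).
      by rewrite /= inordK ?subSn ?subvv // ltnS ltnW.
    rewrite memv_cap; apply/andP; split; last exact: (mem_prodsp Hbil).
    exact: (lpow_ideal Hbil Hleib _ _ _ (fun u _ => I1 u2 u) _ Hs1).
apply: Hnotnil; exists (a + b).+1; apply/eqP; rewrite -subv0.
apply: subv_trans (key _) _; apply/subv_sumP => s _.
case: (leqP a s) => Has.
  apply: subv_trans (capvSl _ _) _.
  by rewrite -(subnKC Has) (lpow_zero Hbil _ _ _ Ha) subvv.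
apply: subv_trans (capvSr _ _) _.
have Hbs : (b <= a + b - s)%N by lia.
by rewrite -(subnKC Hbs) (lpow_zero Hbil _ _ _ Hb) subvv.
Qed.
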